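(* Let $X$ be a set and let ${}^{*}X$ be a topological extension of $X$. Then: (1) ${}^{*}X$ satisfies the principle Ind if and only if ${}^{*}X$ is a Hausdorff space; (2) ${}^{*}X$ satisfies the principle Poss if and only if the $S$-topology of ${}^{*}X$ is quasi-compact; (3) ${}^{*}X$ satisfies both Ind and Poss if and only if the $S$-topology of ${}^{*}X$ is compact (i.e. Hausdorff and quasi-compact). Consequently, in this case either ${}^{*}X$ (with its original topology) is compact, or ${}^{*}X$ is not regular, and then the coarser $S$-topology on ${}^{*}X$ is compact and every ${}^{*}f$ (for $f:X\to X$) is still continuous with respect to the $S$-topology.
   Context: A topological extension of a set $X$ is a $T_1$ topological space ${}^{*}X$ containing $X$ as a discrete dense subspace, together with an assignment to each function $f:X\to X$ of a continuous map ${}^{*}f:{}^{*}X\to{}^{*}X$ extending $f$, such that (c) ${}^{*}g\circ{}^{*}f={}^{*}(g\circ f)$ for all $f,g:X\to X$, and (i) if $f(x)=x$ for all $x\in A\subseteq X$, then ${}^{*}f(\xi)=\xi$ for all $\xi$ in the closure $\overline{A}$ of $A$ in ${}^{*}X$. For $A\subseteq X$ write ${}^{*}A=\overline{A}$ (the closure of $A$ in ${}^{*}X$; it is clopen). The $S$-topology on ${}^{*}X$ is the topology generated by the sets ${}^{*}A$, $A\subseteq X$. Principle Ind: for any two distinct $\xi,\eta\in{}^{*}X$ there is $A\subseteq X$ with $\xi\in{}^{*}A$ and $\eta\notin{}^{*}A$. Principle Poss: for every family $\mathcal F$ of subsets of $X$, if $\bigcap_{A\in\mathcal F}{}^{*}A=\emptyset$,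 then there are finitely many $A_1,\dots,A_n\in\mathcal F$ with $A_1\cap\dots\cap A_n=\emptyset$. ''Compact'' means Hausdorff and quasi-compact. *)

(* Defs.v *)
From HB Require Import structures.
From mathcomp Require Import all_boot all_order.
From mathcomp Require Import all_classical all_reals all_analysis.
Set Implicit Arguments. Unset Strict Implicit. Unset Printing Implicit Defensive.
Local Open Scope classical_set_scope.

Section TopExt.
Context {X : Type} {T : topologicalType}.

Definition star_set (e : X -> T) (A : set X) : set T := closure (e @` A).

Definition is_topological_extension (e : X -> T) (star : (X -> X) -> T -> T)
  : Prop :=
  [/\ accessible_space T,
      injective e,
      (forall x : X, exists U : set T,
          open U /\ U `&` range e = [set e x])
    & dense (range e)] /\
  [/\ (forall f : X -> X, continuous (star f)),
      (forall (f : X -> X) (x : X), star f (e x) = e (f x)),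
      (forall f g : X -> X, star g \o star f = star (g \o f))
    & (forall (f : X -> X) (A : set X), (forall x, A x -> f x = x) ->
        forall xi : T, star_set e A xi -> star f xi = xi) ].

Definition Ind (e : X -> T) : Prop :=
  forall xi eta : T, xi <> eta ->
    exists A : set X, star_set e A xi /\ ~ star_set e A eta.

Definition Poss (e : X -> T) : Prop :=
  forall F : set (set X),
    \bigcap_(A in F) star_set e A = set0 ->
    exists s : seq (set X),
      (forall A, A \in s -> F A) /\ \bigcap_(A in [set` s]) A = set0.

(** the carrier of ^*X equipped with the S-topology, i.e. the topology
    generated by the sets ^*A, A ⊆ X *)
Definition S_top (e : X -> T) : Type := T.
End TopExt.

HB.instance Definition _ (X : Type) (T : topologicalType) (e : X -> T) :=
  Choice.on (S_top e).
HB.instance Definition _ (X : Type) (T : topologicalType) (e : X -> T) :=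
  @isSubBaseTopological.Build (S_top e) (set X) setT
    (fun A : set X => (star_set e A : set (S_top e))).

(* Main.v *)
Require Import Defs.
From HB Require Import structures.
From mathcomp Require Import all_boot all_order.
From mathcomp Require Import all_classical all_reals all_analysis.
From mathcomp Require Import finmap.
Local Open Scope classical_set_scope.

Section Aux.
Context {X : Type} {T : topologicalType} {e : X -> T}
  {star : (X -> X) -> T -> T} (He : is_topological_extension e star).

Let T1 : accessible_space T. Proof. by case: He => -[]. Qed.
Let einj : injective e. Proof. by case: He => -[]. Qed.
Let edense : dense (range e). Proof. by case: He => -[]. Qed.
Let scont f : continuous (star f). Proof. by case: He => _ []. Qed.
Let sext f x : star f (e x) = e (f x). Proof. by case: He => _ []. Qed.

Lemma closure_range : closure (range e) = setT.
Proof.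
apply/seteqP; split => // p _ B; rewrite nbhsE; move=> -[U [oU Up] UB].
have [|t [Ot Rt]] := edense U _ oU; first by exists p.
by exists t; split => //; apply: UB.
Qed.

Lemma star_cover A : star_set e A `|` star_set e (~` A) = setT.
Proof. by rewrite /star_set -closureU -image_setU setUv closure_range. Qed.

Lemma cont_closure (g : T -> T) (B : set T) : continuous g ->
  g @` closure B `<=` closure (g @` B).
Proof.
move=> cg _ [p pB <-] N Nn.
have := pB (g @^-1` N) (cg p N Nn) => -[q [Bq Nq]].
by exists (g q); split => //; exists q.
Qed.

Lemma star_disj A : star_set e A `&` star_set e (~` A) = set0.
Proof.
apply/seteqP; split => // p [pA pnA].
have [[a Aa]|A0] := pselect (exists a, A a); last first.
  move: pA; rewrite /star_set.
  have -> : e @` A = set0.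
    by apply/seteqP; split => // _ [a Aa <-]; apply: A0; exists a.
  by rewrite closure0.
have [[b Ab]|A1] := pselect (exists b, ~ A b); last first.
  move: pnA; rewrite /star_set.
  have -> : e @` (~` A) = set0.
    by apply/seteqP; split => // _ [b Ab <-]; apply: A1; exists b.
  by rewrite closure0.
pose f := fun x => if pselect (A x) then a else b.
have cl1 : forall y : T, closure [set y] = [set y].
  by move=> y; rewrite -(closure_id _).1 //; exact: accessible_closed_set1.
have h1 : star f p = e a.
  have := @cont_closure (star f) _ (scont f) (star f p) (ex_intro2 _ _ p pA erefl).
  have -> : star f @` (e @` A) = [set e a].
    apply/seteqP; split => [_ [_ [x Ax <-] <-]|_ ->].
      by rewrite sext /f /=; case: pselect.
    by exists (e a); [exists a|rewrite sext /f; case: pselect].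
  by rewrite cl1.
have h2 : star f p = e b.
  have := @cont_closure (star f) _ (scont f) (star f p) (ex_intro2 _ _ p pnA erefl).
  have -> : star f @` (e @` (~` A)) = [set e b].
    apply/seteqP; split => [_ [_ [x Ax <-] <-]|_ ->].
      by rewrite sext /f /=; case: pselect.
    by exists (e b); [exists b|rewrite sext /f; case: pselect].
  by rewrite cl1.
have /einj ab : e a = e b by rewrite -h1 -h2.
by apply: Ab; rewrite -ab.
Qed.

Lemma star_compl A : ~` star_set e A = star_set e (~` A).
Proof.
apply/seteqP; split => p.
  by move=> nA; have : setT p by []; rewrite -(star_cover A) => -[].
move=> pn pA; have : (star_set e A `&` star_set e (~` A)) p by [].
by rewrite star_disj.
Qed.

Lemma star_open A : open (star_set e A).
Proof.
have := star_compl (~` A); rewrite setCK => <-.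
rewrite openC; exact: closed_closure.
Qed.

Lemma star_mono A B : A `<=` B -> star_set e A `<=` star_set e B.
Proof. by move=> AB; apply: closureS; apply: image_subset. Qed.

Lemma starT : star_set e setT = setT.
Proof. exact: closure_range. Qed.

Lemma star0 : star_set e set0 = set0.
Proof. by rewrite /star_set image_set0 closure0. Qed.

Lemma star_in A x : star_set e A (e x) -> A x.
Proof.
move=> h; apply: contrapT => nAx.
have : (star_set e A `&` star_set e (~` A)) (e x).
  by split => //; apply: subset_closure; exists x.
by rewrite star_disj.
Qed.

Lemma starI A B : star_set e A `&` star_set e B `<=` star_set e (A `&` B).
Proof.
move=> p [pA pB] N Nn.
have Nn' : nbhs p (N `&` star_set e A).
  apply: filterI => //; apply: open_nbhs_nbhs; split => //; exact: star_open.
have [_ [[b Bb <-] [Nb Ab]]] := pB _ Nn'.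
by exists (e b); split => //; exists b => //; split => //; exact: star_in.
Qed.



Lemma star_bigcap (s : seq (set X)) :
  \bigcap_(A in [set` s]) star_set e A `<=`
  star_set e (\bigcap_(A in [set` s]) A).
Proof.
elim: s => [|a s IH] p.
  move=> _; suff -> : \bigcap_(A in [set` [::]]) A = @setT X by rewrite starT.
  by apply/seteqP; split => // x _ A; rewrite /= in_nil.
move=> h.
have -> : \bigcap_(A in [set` a :: s]) A = a `&` \bigcap_(A in [set` s]) A.
  apply/seteqP; split => x.
    by move=> hx; split; [apply: hx; rewrite /= inE eqxx | move=> A As; apply: hx; rewrite /= inE As orbT].
  by move=> [xa xs] A; rewrite /= inE => /orP[/eqP ->//|/xs].
apply: starI; split; first by apply: h; rewrite /= inE eqxx.
by apply: IH => A As; apply: h; rewrite /= inE As orbT.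
Qed.

Lemma star_img f A : star f @` star_set e (f @^-1` A) `<=` star_set e A.
Proof.
move=> q /(@cont_closure (star f) _ (scont f)); apply: closureS.
by move=> _ [_ [x Ax <-] <-]; rewrite sext; exists (f x).
Qed.

Lemma star_pre f A : star f @^-1` star_set e A = star_set e (f @^-1` A).
Proof.
apply/seteqP; split => p; last by move=> h; exact: (@star_img f A _ (ex_intro2 _ _ p h erefl)).
move=> h; apply: contrapT => np.
have : setT p by []; rewrite -(star_cover (f @^-1` A)) => -[//|pn].
have : (star_set e A `&` star_set e (~` A)) (star f p).
  by split => //; apply: (@star_img f (~` A)); exists p.
by rewrite star_disj.
Qed.

End Aux.

Section STop.
Context {X : Type} {T : topologicalType} {e : X -> T}
  {star : (X -> X) -> T -> T} (He : is_topological_extension e star).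

Lemma S_open A : open (star_set e A : set (S_top e)).
Proof.
exists [set star_set e A].
  move=> _ ->; exact: (@finI_from1 _ _ setT (fun A => star_set e A)).
by rewrite bigcup_set1.
Qed.

Lemma S_nbhsP (p : S_top e) (N : set (S_top e)) :
  nbhs p N <-> exists A, star_set e A p /\ star_set e A `<=` N.
Proof.
split; last first.
  move=> [A [pA AN]]; rewrite nbhsE; exists (star_set e A) => //.
  by split => //; exact: S_open.
rewrite nbhsE; move=> [B [[D' sD' DB] pB] BN].
move: pB; rewrite -DB => -[i Di ip].
have [D'' _ Di''] := sD' i Di.
pose D3 : finmap.finset_of (Phant (set X)) := D''.
change (\bigcap_(j in [set` D3]) star_set e j = i) in Di''.
change (i p) in ip.
exists (\bigcap_(j in [set` D3]) j); split.
  have h := star_bigcap He (finmap.enum_fset D3); apply: h; rewrite Di''; exact: ip.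
move=> q qs; apply: BN; rewrite -DB; exists i => //; rewrite -Di''.
by move=> j jD; apply: star_mono qs => x; apply.
Qed.
End STop.

Lemma bigcap_cons (I : eqType) (U : Type) (f : I -> set U) (a : I) (s : seq I) :
  \bigcap_(i in [set` a :: s]) f i = f a `&` \bigcap_(i in [set` s]) f i.
Proof.
apply/seteqP; split => x.
  move=> hx; split; first by apply: hx; rewrite /= inE eqxx.
  by move=> A As; apply: hx; rewrite /= inE As orbT.
by move=> [xa xs] A; rewrite /= inE => /orP[/eqP ->//|/xs].
Qed.

Lemma filter_bigcap_seq (U : Type) (F : set_system U) (I : eqType)
  (f : I -> set U) (s : seq I) : Filter F ->
  (forall i, i \in s -> F (f i)) -> F (\bigcap_(i in [set` s]) f i).
Proof.
move=> FF; elim: s => [|a s IH] h.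
  apply: filterS (@filterT _ _ FF) => x _ i; by rewrite /= in_nil.
rewrite bigcap_cons; apply: filterI; first by apply: h; rewrite inE eqxx.
by apply: IH => i ins; apply: h; rewrite inE ins orbT.
Qed.

Section Main.
Context {X : Type} {T : topologicalType} {e : X -> T}
  {star : (X -> X) -> T -> T} (He : is_topological_extension e star).

Let edense : dense (range e). Proof. by case: He => -[]. Qed.
Let scont f : continuous (star f). Proof. by case: He => _ []. Qed.

Lemma open_star_pre (U : set T) (p : T) : open U -> U p ->
  star_set e (e @^-1` U) p.
Proof.
move=> oU Up N; rewrite nbhsE; move=> [V [oV Vp] VN].
have [|t [[Ut Vt] [x _ ex]]] := edense (U `&` V) _ (openI oU oV).
  by exists p.
by exists t; split; [exists x; [rewrite /= ex|] | apply: VN].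
Qed.

Lemma part1 : Ind e <-> hausdorff_space T.
Proof.
split.
  move=> hI; rewrite open_hausdorff => x y /eqP xy.
  have [A [xA yA]] := hI x y xy.
  exists (star_set e A, star_set e (~` A)) => /=.
    by split; apply/mem_set => //; rewrite -(star_compl He); exact: yA.
  split; [exact: (star_open He)|exact: (star_open He)|].
  by apply/eqP; rewrite (star_disj He).
rewrite open_hausdorff => hH xi eta /eqP xe.
have [[U V] /= [xU eV] [oU oV /eqP UV]] := hH _ _ xe.
move: xU eV; rewrite !in_setE => xU eV.
exists (e @^-1` U); split; first exact: open_star_pre.
move=> h; have : closure U eta.
  apply: (closureS _ h); by move=> _ [x Ux <-].
move=> /(_ V (open_nbhs_nbhs (conj oV eV))) [z zUV].
by have : set0 z by rewrite -UV.
Qed.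

Lemma partS : Ind e <-> hausdorff_space (S_top e).
Proof.
split.
  move=> hI; rewrite open_hausdorff => x y /eqP xy.
  have [A [xA yA]] := hI x y xy.
  exists ((star_set e A : set (S_top e)), (star_set e (~` A) : set (S_top e))) => /=.
    by split; apply/mem_set => //; rewrite -(star_compl He); exact: yA.
  split; [exact: S_open|exact: S_open|].
  by apply/eqP; rewrite (star_disj He).
rewrite open_hausdorff => hH xi eta /eqP xe.
have [[U V] /= [xU eV] [oU oV /eqP UV]] := hH _ _ xe.
move: xU eV; rewrite !in_setE => xU eV.
have /(S_nbhsP He) [C [xC CU]] : nbhs (xi : S_top e) U.
  rewrite nbhsE /=; exists U; first split; [exact: oU|exact: xU|by []].
exists C; split => // eC.
by have : set0 eta by rewrite -UV; split => //; apply: CU.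
Qed.

Lemma part2 : Poss e <-> compact [set: S_top e].
Proof.
split.
  move=> P F PF _.
  pose FF := [set A | F (star_set e A)].
  have [p pF] : exists p, (\bigcap_(A in FF) star_set e A) p.
    apply: contrapT => np.
    have [s [sF s0]] : exists s : seq (set X),
       (forall A, A \in s -> FF A) /\ \bigcap_(A in [set` s]) A = set0.
      apply: P; apply/seteqP; split => // q hq; apply: np; by exists q.
    have : F (\bigcap_(A in [set` s]) star_set e A).
      by apply: filter_bigcap_seq => //; exact: sF.
    move=> /(filterS (star_bigcap He s)); rewrite s0 star0.
    exact: filter_not_empty.
  exists p; split => //.
  move=> B N FB /(S_nbhsP He) [C [pC CN]].
  have [[q [Bq Nq]]|nB] := pselect (exists q, B q /\ N q); first by exists q.
  have FC : FF (~` C).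
    apply: filterS FB => q Bq; rewrite -(star_compl He) => qC.
    by apply: nB; exists q; split => //; apply: CN.
  have : (star_set e C `&` star_set e (~` C)) p by split => //; apply: pF.
  by rewrite (star_disj He).
move=> cpt FF FF0; apply: contrapT => nP.
have fin : finI FF (fun A => star_set e A : set (S_top e)).
  move=> D' sD'.
  have [x hx] : \bigcap_(A in [set` (enum_fset D')]) A !=set0.
    apply/set0P/negP => /eqP h0; apply: nP; exists (enum_fset D').
    by split => // A AD; apply/set_mem; exact: sD'.
  by exists (e x) => A AD; apply: subset_closure; exists x => //; apply: hx.
have PF := finI_filter fin.
have [p [_ clp]] := cpt _ PF (@filterT _ _ (@filter_filter _ _ PF)).
have : (\bigcap_(A in FF) star_set e A) p.
  move=> A FA; apply: contrapT => npA.
  have pnA : star_set e (~` A) p by rewrite -(star_compl He).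
  have /(S_nbhsP He) hN : exists C, star_set e C p /\ star_set e C `<=` star_set e (~` A).
    by exists (~` A); split.
  have [q [qA qnA]] := clp (star_set e A) _ (ex_intro2 _ _ _ (finI_from1 _ FA) (fun _ h => h)) hN.
  have : (star_set e A `&` star_set e (~` A)) q by [].
  by rewrite (star_disj He).
by rewrite FF0.
Qed.


Lemma reg_compact : regular_space T -> compact [set: S_top e] -> compact [set: T].
Proof.
move=> reg cpt F PF FT.
have [p [_ clp]] := cpt F PF FT.
exists p; split => // B N FB Nn.
apply: clp FB _.
have [V Vn VN] := reg p N Nn.
move: Vn; rewrite nbhsE; move=> [U [oU Up] UV].
apply/(S_nbhsP He); exists (e @^-1` U); split; first exact: open_star_pre.
move=> q qs; apply: VN; apply: (closureS _ qs).
by move=> _ [x Ux <-]; apply: UV.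
Qed.

Lemma S_cont f : continuous (star f : S_top e -> S_top e).
Proof.
move=> x N /(S_nbhsP He) [C [xC CN]].
apply/(S_nbhsP He); exists (f @^-1` C); split; first by rewrite -(star_pre He).
by move=> q; rewrite -(star_pre He) => qC; apply: CN.
Qed.

End Main.

Theorem corollary1p3 (X : Type) (T : topologicalType) (e : X -> T)
    (star : (X -> X) -> T -> T) :
  is_topological_extension e star ->
  (* (1) *)
  (Ind e <-> hausdorff_space T) /\
  (* (2) *)
  (Poss e <-> compact [set: S_top e]) /\
  (* (3) *)
  ((Ind e /\ Poss e) <->
     (hausdorff_space (S_top e) /\ compact [set: S_top e])) /\
  (* consequence *)
  (Ind e /\ Poss e ->
     ((hausdorff_space T /\ compact [set: T]) \/ ~ @regular_space T) /\
     (hausdorff_space (S_top e) /\ compact [set: S_top e]) /\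
     (forall f : X -> X, continuous (star f : S_top e -> S_top e))).
Proof.
move=> He.
have h1 := part1 He; have h2 := part2 He; have hS := partS He.
split; first exact: h1.
split; first exact: h2.
split.
  split; move=> [a b]; (split; [exact/hS|exact/h2]).
move=> [hI hP]; split.
  have cS : compact [set: S_top e] by exact/h2.
  have [reg|nreg] := pselect (regular_space T); last by right.
  by left; split; [exact/h1|exact: (reg_compact He)].
split; first by split; [exact/hS|exact/h2].
exact: S_cont.
Qed.
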